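(* Let $C\geq 1$ and $n\ge 2$. Let $x_1<\dots<x_n$, $y_1<\dots<y_n$, $p_1<\dots<p_n$ be real numbers, and write $\Delta x_i=x_{i+1}-x_i$, $\Delta y_i=y_{i+1}-y_i$, $\Delta p_i=p_{i+1}-p_i$ for $1\le i\le n-1$. Suppose that for all $1\le i\le n-1$, \[ C^{-1}\Delta x_i\le \Delta p_i\le C\Delta x_i \quad\text{and}\quad C^{-1}\Big(p_{i+1}-\tfrac{\Delta y_i}{\Delta x_i}\Big)\le \tfrac{\Delta y_i}{\Delta x_i}-p_i\le C\Big(p_{i+1}-\tfrac{\Delta y_i}{\Delta x_i}\Big). \] Then there is a constant $K\ge1$ depending only on $C$ such that: (a) There exists a strictly convex $C^1$ function $f$ on $[x_1,x_n]$ with $f(x_i)=y_i$ and $f'(x_i)=p_i$ for all $i$, such that $f'$ is piecewise linear and each linear piece of $f'$ has slope in $[K^{-1},K]$. (b) Letting $D$ be $\frac{\pi}{4}$ times the infimum of the slopes of the linear pieces of $f'$ for the function $f$ in (a), the function $f$ can be modified to a convex $C^2$ function $g$ on $[x_1,x_n]$ with $g(x_i)=y_i$, $g'(x_i)=p_i$ and $g''(x_i)=D$ for all $i$, and $K^{-1}\le g''(x)\le K$ for all $x\in(x_1,x_n)$. *)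

(* Defs.v *)
From Stdlib Require Import Reals.
Open Scope R_scope.

Definition has_deriv_within (a b : R) (f : R -> R) (x d : R) : Prop :=
  forall eps : R, 0 < eps -> exists delta : R, 0 < delta /\
    forall y : R, a <= y <= b -> y <> x -> Rabs (y - x) < delta ->
      Rabs ((f y - f x) / (y - x) - d) < eps.

Definition cont_on (a b : R) (f : R -> R) : Prop :=
  forall x : R, a <= x <= b ->
    forall eps : R, 0 < eps -> exists delta : R, 0 < delta /\
      forall y : R, a <= y <= b -> Rabs (y - x) < delta -> Rabs (f y - f x) < eps.

Definition C1_on (a b : R) (f f1 : R -> R) : Prop :=
  (forall x, a <= x <= b -> has_deriv_within a b f x (f1 x)) /\ cont_on a b f1.

Definition C2_on (a b : R) (f f1 f2 : R -> R) : Prop :=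
  (forall x, a <= x <= b -> has_deriv_within a b f x (f1 x)) /\
  (forall x, a <= x <= b -> has_deriv_within a b f1 x (f2 x)) /\
  cont_on a b f2.

Definition convex_on (a b : R) (f : R -> R) : Prop :=
  forall u v l : R, a <= u <= b -> a <= v <= b -> 0 <= l <= 1 ->
    f (l * u + (1 - l) * v) <= l * f u + (1 - l) * f v.

Definition strictly_convex_on (a b : R) (f : R -> R) : Prop :=
  forall u v l : R, a <= u <= b -> a <= v <= b -> u <> v -> 0 < l < 1 ->
    f (l * u + (1 - l) * v) < l * f u + (1 - l) * f v.

Fixpoint minl (s : nat -> R) (k : nat) : R :=
  match k with
  | O => s O
  | S k' => Rmin (minl s k') (s (S k'))
  end.

(* Main.v *)
Require Import Defs.
From Stdlib Require Import Reals Lra Lia.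
From Coquelicot Require Import Coquelicot.
Open Scope R_scope.

Lemma PI_lt_4 : PI < 4.
Proof. pose proof (PI_ineq 1) as [_ H]. simpl in H. unfold tg_alt, PI_tg in H. simpl in H. lra. Qed.
Lemma PI_gt_3 : 3 < PI.
Proof. pose proof PI2_3_2. lra. Qed.

Definition T1 (t z : R) : R := Rmax (z - t) 0.
Definition T2 (t z : R) : R := T1 t z ^ 2 / 2.
Definition T3 (t z : R) : R := T1 t z ^ 3 / 6.

Lemma T1_lo t z : z <= t -> T1 t z = 0.
Proof. intros; unfold T1, Rmax; destruct Rle_dec; lra. Qed.
Lemma T1_hi t z : t <= z -> T1 t z = z - t.
Proof. intros; unfold T1, Rmax; destruct Rle_dec; lra. Qed.
Lemma T1_lip t u v : Rabs (T1 t u - T1 t v) <= Rabs (u - v).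
Proof. unfold T1, Rmax; repeat destruct Rle_dec; unfold Rabs; repeat destruct Rcase_abs; lra. Qed.
Lemma T1_mono t u v : u <= v -> 0 <= T1 t v - T1 t u <= v - u.
Proof. intros; unfold T1, Rmax; repeat destruct Rle_dec; lra. Qed.

Lemma deriv_local (f G1 G2 : R -> R) z d del :
  0 < del -> (forall y, z - del <= y <= z -> f y = G1 y) ->
  (forall y, z <= y <= z + del -> f y = G2 y) ->
  derivable_pt_lim G1 z d -> derivable_pt_lim G2 z d -> derivable_pt_lim f z d.
Proof.
  intros Hd H1 H2 D1 D2 eps Heps.
  destruct (D1 eps Heps) as [d1 E1]. destruct (D2 eps Heps) as [d2 E2].
  assert (Hp : 0 < Rmin del (Rmin d1 d2)).
  { destruct d1, d2; simpl. repeat apply Rmin_pos; auto. }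
  exists (mkposreal _ Hp). simpl. intros h Hh Hab.
  pose proof (Rmin_l del (Rmin d1 d2)). pose proof (Rmin_r del (Rmin d1 d2)).
  pose proof (Rmin_l d1 d2). pose proof (Rmin_r d1 d2).
  assert (Habs: Rabs h < del /\ Rabs h < d1 /\ Rabs h < d2) by lra.
  destruct (Rle_lt_dec h 0).
  - rewrite (H1 (z + h)), (H1 z). apply E1; tauto.
    + lra. + revert Habs; unfold Rabs; destruct Rcase_abs; lra.
  - rewrite (H2 (z + h)), (H2 z). apply E2; tauto.
    + lra. + revert Habs; unfold Rabs; destruct Rcase_abs; lra.
Qed.

Definition ct (f : R -> R) (z : R) : Prop :=
  forall eps, 0 < eps -> exists d, 0 < d /\ forall y, Rabs (y - z) < d -> Rabs (f y - f z) < eps.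

Lemma ct_local (f G1 G2 : R -> R) z del :
  0 < del -> (forall y, z - del <= y <= z -> f y = G1 y) ->
  (forall y, z <= y <= z + del -> f y = G2 y) ->
  ct G1 z -> ct G2 z -> ct f z.
Proof.
  intros Hd H1 H2 D1 D2 eps Heps.
  destruct (D1 eps Heps) as [d1 [P1 E1]]. destruct (D2 eps Heps) as [d2 [P2 E2]].
  exists (Rmin del (Rmin d1 d2)). split. { repeat apply Rmin_pos; auto. }
  intros h Hab.
  pose proof (Rmin_l del (Rmin d1 d2)). pose proof (Rmin_r del (Rmin d1 d2)).
  pose proof (Rmin_l d1 d2). pose proof (Rmin_r d1 d2).
  assert (Habs: Rabs (h - z) < del /\ Rabs (h - z) < d1 /\ Rabs (h-z) < d2) by lra.
  destruct (Rle_lt_dec h z).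
  - rewrite (H1 h), (H1 z). apply E1; tauto.
    + lra. + revert Habs; unfold Rabs; destruct Rcase_abs; lra.
  - rewrite (H2 h), (H2 z). apply E2; tauto.
    + lra. + revert Habs; unfold Rabs; destruct Rcase_abs; lra.
Qed.

Lemma ct_lip (f : R -> R) L z : 0 <= L -> (forall u v, Rabs (f u - f v) <= L * Rabs (u - v)) -> ct f z.
Proof.
  intros HL H eps Heps. exists (eps / (L + 1)). split.
  { apply Rdiv_lt_0_compat; lra. }
  intros y Hy. eapply Rle_lt_trans. apply H.
  apply Rle_lt_trans with ((L+1) * Rabs (y - z)).
  { pose proof (Rabs_pos (y - z)). nra. }
  apply Rmult_lt_reg_l with (/ (L+1)). apply Rinv_0_lt_compat; lra.
  rewrite <- Rmult_assoc, Rinv_l by lra. rewrite Rmult_1_l.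
  unfold Rdiv in Hy. lra.
Qed.

Lemma dpl_ext (f g : R -> R) z d : (forall y, f y = g y) -> derivable_pt_lim f z d -> derivable_pt_lim g z d.
Proof. intros H D eps He. destruct (D eps He) as [d1 E]. exists d1. intros. rewrite <- !H. auto. Qed.

Lemma dpl_plus (f g : R -> R) z a b : derivable_pt_lim f z a -> derivable_pt_lim g z b ->
  derivable_pt_lim (fun y => f y + g y) z (a + b).
Proof. intros; apply (derivable_pt_lim_plus f g z a b); auto. Qed.
Lemma dpl_scal (f : R -> R) c z a : derivable_pt_lim f z a ->
  derivable_pt_lim (fun y => c * f y) z (c * a).
Proof. intros; apply (derivable_pt_lim_scal f c z a); auto. Qed.
Lemma dpl_const c z : derivable_pt_lim (fun _ => c) z 0.
Proof. apply derivable_pt_lim_const. Qed.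

Lemma dpl_poly (c0 c1 c2 c3 x0 z : R) :
  derivable_pt_lim (fun y => c0 + c1 * (y - x0) + c2 * (y - x0)^2 / 2 + c3 * (y - x0)^3/6) z
     (c1 + c2 * (z - x0) + c3 * (z - x0)^2/2).
Proof.
  apply is_derive_Reals. auto_derive. auto. field.
Qed.

Lemma dpl_T2 t z : derivable_pt_lim (T2 t) z (T1 t z).
Proof.
  destruct (Rlt_le_dec z t) as [Hl|Hl].
  - apply (deriv_local _ (fun _ => 0) (fun _ => 0) z _ (t - z)); try lra.
    + intros; unfold T2; rewrite T1_lo; lra.
    + intros; unfold T2; rewrite T1_lo; lra.
    + rewrite T1_lo by lra; apply dpl_const.
    + rewrite T1_lo by lra; apply dpl_const.
  - assert (E: derivable_pt_lim (fun y => (y - t)^2/2) z (z - t)).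
    { apply is_derive_Reals. auto_derive. auto. field. }
    destruct (Rle_lt_dec z t) as [He|He].
    + assert (z = t) by lra; subst.
      apply (deriv_local _ (fun _ => 0) (fun y => (y - t)^2/2) t _ 1); try lra.
      * intros; unfold T2; rewrite T1_lo; lra.
      * intros; unfold T2; rewrite T1_hi; lra.
      * rewrite T1_lo by lra; apply dpl_const.
      * rewrite T1_lo by lra. replace 0 with (t - t) by ring. auto.
    + apply (deriv_local _ (fun y => (y - t)^2/2) (fun y => (y - t)^2/2) z _ (z - t)); try lra.
      * intros; unfold T2; rewrite T1_hi; lra.
      * intros; unfold T2; rewrite T1_hi; lra.
      * rewrite T1_hi by lra; auto.
      * rewrite T1_hi by lra; auto.
Qed.

Lemma dpl_T3 t z : derivable_pt_lim (T3 t) z (T2 t z).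
Proof.
  destruct (Rlt_le_dec z t) as [Hl|Hl].
  - apply (deriv_local _ (fun _ => 0) (fun _ => 0) z _ (t - z)); try lra.
    + intros; unfold T3; rewrite T1_lo; lra.
    + intros; unfold T3; rewrite T1_lo; lra.
    + unfold T2; rewrite T1_lo by lra. replace (0^2/2) with 0 by field. apply dpl_const.
    + unfold T2; rewrite T1_lo by lra. replace (0^2/2) with 0 by field. apply dpl_const.
  - assert (E: derivable_pt_lim (fun y => (y - t)^3/6) z ((z - t)^2/2)).
    { apply is_derive_Reals. auto_derive. auto. field. }
    destruct (Rle_lt_dec z t) as [He|He].
    + assert (z = t) by lra; subst.
      apply (deriv_local _ (fun _ => 0) (fun y => (y - t)^3/6) t _ 1); try lra.
      * intros; unfold T3; rewrite T1_lo; lra.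
      * intros; unfold T3; rewrite T1_hi; lra.
      * unfold T2; rewrite T1_lo by lra. replace (0^2/2) with 0 by field. apply dpl_const.
      * unfold T2; rewrite T1_lo by lra. replace (0^2/2) with ((t-t)^2/2) by field. auto.
    + apply (deriv_local _ (fun y => (y - t)^3/6) (fun y => (y - t)^3/6) z _ (z - t)); try lra.
      * intros; unfold T3; rewrite T1_hi; lra.
      * intros; unfold T3; rewrite T1_hi; lra.
      * unfold T2; rewrite T1_hi by lra; auto.
      * unfold T2; rewrite T1_hi by lra; auto.
Qed.
Definition Fpc (y0 p0 x0 al be tau z : R) := y0 + p0*(z-x0) + al*(z-x0)^2/2 + be * T2 tau z.
Definition F1pc (p0 x0 al be tau z : R) := p0 + al*(z-x0) + be*T1 tau z.
Definition hat3 (c w z : R) := T3 (c-w) z + (-2) * T3 c z + T3 (c+w) z.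
Definition hat2 (c w z : R) := T2 (c-w) z + (-2) * T2 c z + T2 (c+w) z.
Definition hat1 (c w z : R) := T1 (c-w) z + (-2) * T1 c z + T1 (c+w) z.
Definition Gpc (y0 p0 x0 D e c w z : R) := y0 + p0*(z-x0) + D*(z-x0)^2/2 + e * hat3 c w z.
Definition G1pc (p0 x0 D e c w z : R) := p0 + D*(z-x0) + e * hat2 c w z.
Definition G2pc (D e c w z : R) := D + e * hat1 c w z.

Lemma dpl_eqv (f g : R -> R) z a b : derivable_pt_lim f z a -> a = b -> (forall y, f y = g y) ->
  derivable_pt_lim g z b.
Proof. intros D -> H. eapply dpl_ext; eauto. Qed.

Lemma dpl_F y0 p0 x0 al be tau z : derivable_pt_lim (Fpc y0 p0 x0 al be tau) z (F1pc p0 x0 al be tau z).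
Proof.
  eapply dpl_eqv.
  apply (dpl_plus _ _ z _ _ (dpl_poly y0 p0 al 0 x0 z) (dpl_scal (T2 tau) be z _ (dpl_T2 tau z))).
  unfold F1pc; field. intros; unfold Fpc; cbv beta; field.
Qed.

Lemma dpl_hat3 c w z : derivable_pt_lim (hat3 c w) z (hat2 c w z).
Proof.
  eapply dpl_eqv.
  apply (dpl_plus _ _ z _ _ (dpl_plus _ _ z _ _ (dpl_T3 (c-w) z) (dpl_scal _ (-2) z _ (dpl_T3 c z))) (dpl_T3 (c+w) z)).
  reflexivity. intros; reflexivity.
Qed.
Lemma dpl_hat2 c w z : derivable_pt_lim (hat2 c w) z (hat1 c w z).
Proof.
  eapply dpl_eqv.
  apply (dpl_plus _ _ z _ _ (dpl_plus _ _ z _ _ (dpl_T2 (c-w) z) (dpl_scal _ (-2) z _ (dpl_T2 c z))) (dpl_T2 (c+w) z)).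
  reflexivity. intros; reflexivity.
Qed.

Lemma dpl_G y0 p0 x0 D e c w z : derivable_pt_lim (Gpc y0 p0 x0 D e c w) z (G1pc p0 x0 D e c w z).
Proof.
  eapply dpl_eqv.
  apply (dpl_plus _ _ z _ _ (dpl_poly y0 p0 D 0 x0 z) (dpl_scal _ e z _ (dpl_hat3 c w z))).
  unfold G1pc; field. intros; unfold Gpc; cbv beta; field.
Qed.
Lemma dpl_G1 p0 x0 D e c w z : derivable_pt_lim (G1pc p0 x0 D e c w) z (G2pc D e c w z).
Proof.
  eapply dpl_eqv.
  apply (dpl_plus _ _ z _ _ (dpl_poly p0 D 0 0 x0 z) (dpl_scal _ e z _ (dpl_hat2 c w z))).
  unfold G2pc; field. intros; unfold G1pc; cbv beta; field.
Qed.

Lemma hat1_bounds c w z : 0 <= w -> 0 <= hat1 c w z <= w.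
Proof. intros; unfold hat1, T1, Rmax; repeat destruct Rle_dec; lra. Qed.

Lemma F1pc_lip p0 x0 al be tau : forall u v, Rabs (F1pc p0 x0 al be tau u - F1pc p0 x0 al be tau v) <= (Rabs al + Rabs be) * Rabs (u - v).
Proof.
  intros u v. unfold F1pc.
  replace (p0 + al * (u - x0) + be * T1 tau u - (p0 + al * (v - x0) + be * T1 tau v))
    with (al * (u - v) + be * (T1 tau u - T1 tau v)) by ring.
  eapply Rle_trans. apply Rabs_triang. rewrite !Rabs_mult.
  pose proof (T1_lip tau u v). pose proof (Rabs_pos be). pose proof (Rabs_pos al).
  nra.
Qed.

Lemma G2pc_lip D e c w : forall u v, Rabs (G2pc D e c w u - G2pc D e c w v) <= (4 * Rabs e) * Rabs (u - v).
Proof.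
  intros u v. unfold G2pc, hat1.
  replace (D + e * (T1 (c - w) u + -2 * T1 c u + T1 (c + w) u) - (D + e * (T1 (c - w) v + -2 * T1 c v + T1 (c + w) v)))
    with (e * ((T1 (c - w) u - T1 (c-w) v) + (-2) * (T1 c u - T1 c v) + (T1 (c + w) u - T1 (c+w) v))) by ring.
  rewrite Rabs_mult.
  pose proof (T1_lip (c-w) u v). pose proof (T1_lip c u v). pose proof (T1_lip (c+w) u v).
  pose proof (Rabs_pos e).
  assert (Rabs ((T1 (c - w) u - T1 (c-w) v) + (-2) * (T1 c u - T1 c v) + (T1 (c + w) u - T1 (c+w) v)) <= 4 * Rabs (u - v)).
  { eapply Rle_trans. apply Rabs_triang. eapply Rle_trans. apply Rplus_le_compat_r. apply Rabs_triang.
    rewrite Rabs_mult. replace (Rabs (-2)) with 2 by (rewrite Rabs_left; lra). lra. }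
  nra.
Qed.

Fixpoint glue (x : nat -> R) (F : nat -> R -> R) (k i : nat) (z : R) : R :=
  match k with
  | O => F i z
  | S k' => if Rle_dec z (x (i + 1)%nat) then F i z else glue x F k' (i + 1)%nat z
  end.

Definition xinc (n : nat) (x : nat -> R) := forall a b, (a < b)%nat -> (b < n)%nat -> x a < x b.
Definition matching (n : nat) (x : nat -> R) (F : nat -> R -> R) :=
  forall i, (i + 2 < n)%nat -> F i (x (i + 1)%nat) = F (i + 1)%nat (x (i + 1)%nat).

Lemma glue_spec n x F : xinc n x -> matching n x F ->
  forall k i j z, (i <= j <= i + k)%nat -> (i + k + 1 < n)%nat ->
  (j = i \/ x j <= z) -> ((j = i + k)%nat \/ z <= x (j + 1)%nat) -> glue x F k i z = F j z.
Proof.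
  intros Hx Hm. unfold matching in Hm. induction k as [|k IH]; intros i j z Hij Hn H1 H2; simpl.
  - f_equal; lia.
  - destruct (Rle_dec z (x (i + 1)%nat)) as [Hz|Hz].
    + destruct H1 as [->|H1]; [reflexivity|].
      destruct (Nat.eq_dec j i) as [->|Hji]; [reflexivity|].
      assert (j = i + 1)%nat.
      { destruct (Nat.lt_ge_cases (i+1) j) as [Hlt|Hge]; [|lia].
        pose proof (Hx (i+1)%nat j Hlt ltac:(lia)). lra. }
      subst j. assert (z = x (i+1)%nat) by lra. subst z.
      apply Hm. lia.
    + destruct (Nat.eq_dec j i) as [->|Hji].
      * destruct H2 as [H2|H2]; [lia|lra].
      * apply IH; try lia. destruct H1; [lia|right; auto].
        destruct H2 as [H2|H2]; [left; lia|right; auto].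
Qed.

Lemma locate n x z : xinc n x -> (2 <= n)%nat -> x 0%nat <= z <= x (n - 1)%nat ->
  exists j, (j + 1 < n)%nat /\ x j <= z <= x (j + 1)%nat.
Proof.
  intros Hx Hn Hz.
  assert (forall k, (k + 1 < n)%nat -> z <= x (k + 1)%nat -> exists j, (j + 1 < n)%nat /\ x j <= z <= x (j + 1)%nat).
  { induction k as [|k IH]; intros Hk Hzk.
    - exists 0%nat. split; [lia|]. simpl in *. lra.
    - destruct (Rle_dec z (x (k + 1)%nat)).
      + apply IH; auto; lia.
      + exists (S k). split; [lia|]. replace (S k) with (k+1)%nat in * by lia. lra. }
  apply (H (n - 2)%nat). lia. replace (n - 2 + 1)%nat with (n - 1)%nat by lia. lra.
Qed.

Lemma glue_local n x z : xinc n x -> (2 <= n)%nat -> x 0%nat <= z <= x (n - 1)%nat ->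
  exists del i1 i2, 0 < del /\ (i1 + 1 < n)%nat /\ (i2 + 1 < n)%nat /\
    x i2 <= z <= x (i2 + 1)%nat /\
    (forall F : nat -> R -> R, matching n x F ->
       F i1 z = F i2 z /\
       (forall y, z - del <= y <= z -> glue x F (n - 2) 0 y = F i1 y) /\
       (forall y, z <= y <= z + del -> glue x F (n - 2) 0 y = F i2 y)).
Proof.
  intros Hx Hn Hz.
  destruct (locate n x z Hx Hn Hz) as [j0 [Hj0 Hzj0]].
  assert (exists j, (j + 1 < n)%nat /\ x j <= z <= x (j+1)%nat /\ (z < x (j+1)%nat \/ (j + 2 = n)%nat)) as [j [Hj [Hzj Hlt]]].
  { destruct (Rlt_le_dec z (x (j0 + 1)%nat)).
    - exists j0; repeat split; try lra; auto.
    - destruct (Nat.eq_dec (j0 + 2) n).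
      + exists j0; repeat split; try lra; auto.
      + exists (j0 + 1)%nat. assert (z = x (j0+1)%nat) by lra.
        pose proof (Hx (j0+1)%nat (j0+1+1)%nat ltac:(lia) ltac:(lia)).
        repeat split; try lia; try lra. }
  assert (Hx01 : forall a, (a + 1 < n)%nat -> x a < x (a+1)%nat) by (intros; apply Hx; lia).
  pose proof (Hx01 j Hj) as Hjj.
  destruct (Rlt_le_dec (x j) z) as [Hin|Heq].
  -
    exists (Rmin (z - x j) (if Rlt_dec z (x (j+1)%nat) then x (j+1)%nat - z else 1)), j, j.
    assert (Hpos : 0 < Rmin (z - x j) (if Rlt_dec z (x (j+1)%nat) then x (j+1)%nat - z else 1)).
    { apply Rmin_pos; [lra|]. destruct Rlt_dec; lra. }
    split; [auto|]. split; [auto|]. split; [auto|]. split; [lra|].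
    intros F HF. pose proof (Rmin_l (z - x j) (if Rlt_dec z (x (j+1)%nat) then x (j+1)%nat - z else 1)).
    pose proof (Rmin_r (z - x j) (if Rlt_dec z (x (j+1)%nat) then x (j+1)%nat - z else 1)).
    split; [reflexivity|split]; intros y Hy; apply (glue_spec n); auto; try lia.
    + right; lra.
    + right; lra.
    + right; lra.
    + destruct (Rlt_dec z (x (j+1)%nat)).
      * right; lra.
      * left. destruct Hlt; [lra|lia].
  - assert (z = x j) by lra. subst z.
    destruct j as [|j'].
    + exists (x 1%nat - x 0%nat), 0%nat, 0%nat.
      pose proof (Hx01 0%nat ltac:(lia)). simpl in *.
      split; [lra|]. split; [lia|]. split; [lia|]. split; [lra|].
      intros F HF. split; [reflexivity|split]; intros y Hy; apply (glue_spec n); auto; try lia.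
      * right; simpl; lra.
      * right; simpl; lra.
    + pose proof (Hx01 j' ltac:(lia)) as Hp.
      replace (j' + 1)%nat with (S j') in Hp by lia.
      exists (Rmin (x (S j') - x j') (if Rlt_dec (x (S j')) (x (S j' + 1)%nat) then x (S j'+1)%nat - x (S j') else 1)), j', (S j').
      assert (Hpos : 0 < Rmin (x (S j') - x j') (if Rlt_dec (x (S j')) (x (S j' + 1)%nat) then x (S j'+1)%nat - x (S j') else 1)).
      { apply Rmin_pos; [lra|]. destruct Rlt_dec; lra. }
      split; [auto|]. split; [lia|]. split; [lia|]. split; [lra|].
      intros F HF.
      pose proof (Rmin_l (x (S j') - x j') (if Rlt_dec (x (S j')) (x (S j' + 1)%nat) then x (S j'+1)%nat - x (S j') else 1)).
      pose proof (Rmin_r (x (S j') - x j') (if Rlt_dec (x (S j')) (x (S j' + 1)%nat) then x (S j'+1)%nat - x (S j') else 1)).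
      split; [|split]; [| intros y Hy; apply (glue_spec n); auto; try lia ..].
      * replace (S j') with (j' + 1)%nat by lia. apply HF. lia.
      * right; lra.
      * right. replace (j' + 1)%nat with (S j') by lia. lra.
      * right; lra.
      * destruct (Rlt_dec (x (S j')) (x (S j' + 1)%nat)).
        -- right; lra.
        -- left. destruct Hlt; [lra|lia].
Qed.

Lemma glue_in n x F j z : xinc n x -> matching n x F -> (2 <= n)%nat -> (j + 1 < n)%nat ->
  x j <= z <= x (j + 1)%nat -> glue x F (n - 2) 0 z = F j z.
Proof. intros; apply (glue_spec n); auto; try lia; right; lra. Qed.

Lemma glue_deriv n x F F' z : xinc n x -> (2 <= n)%nat ->
  (forall i, (i + 1 < n)%nat -> forall z, derivable_pt_lim (F i) z (F' i z)) ->
  matching n x F -> matching n x F' -> x 0%nat <= z <= x (n - 1)%nat ->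
  derivable_pt_lim (glue x F (n - 2) 0) z (glue x F' (n - 2) 0 z).
Proof.
  intros Hx Hn HD HF HF' Hz.
  destruct (glue_local n x z Hx Hn Hz) as [del [i1 [i2 [Hd [Hi1 [Hi2 [Hzi L]]]]]]].
  destruct (L F HF) as [E1 [E2 E3]]. destruct (L F' HF') as [E1' [E2' E3']].
  rewrite (E3' z) by lra.
  apply (deriv_local _ (F i1) (F i2) z _ del Hd E2 E3).
  - rewrite <- E1'. apply HD; auto.
  - apply HD; auto.
Qed.

Lemma glue_ct n x F z : xinc n x -> (2 <= n)%nat ->
  (forall i, (i + 1 < n)%nat -> forall z, ct (F i) z) ->
  matching n x F -> x 0%nat <= z <= x (n - 1)%nat -> ct (glue x F (n - 2) 0) z.
Proof.
  intros Hx Hn HD HF Hz.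
  destruct (glue_local n x z Hx Hn Hz) as [del [i1 [i2 [Hd [Hi1 [Hi2 [Hzi L]]]]]]].
  destruct (L F HF) as [E1 [E2 E3]].
  apply (ct_local _ (F i1) (F i2) z del Hd E2 E3); apply HD; auto.
Qed.

Lemma glue_incr n x F : xinc n x -> (2 <= n)%nat -> matching n x F ->
  (forall i, (i + 1 < n)%nat -> forall u v, x i <= u -> u < v -> v <= x (i + 1)%nat -> F i u < F i v) ->
  forall u v, x 0%nat <= u -> u < v -> v <= x (n - 1)%nat ->
    glue x F (n - 2) 0 u < glue x F (n - 2) 0 v.
Proof.
  intros Hx Hn HF Hinc.
  assert (Hp : forall i, (i + 1 < n)%nat -> forall u v, x i <= u -> u < v -> v <= x (i + 1)%nat ->
            glue x F (n - 2) 0 u < glue x F (n - 2) 0 v).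
  { intros i Hi u v H1 H2 H3. pose proof (Hx i (i+1)%nat ltac:(lia) ltac:(lia)).
    rewrite (glue_in n x F i u), (glue_in n x F i v); auto; try lra. }
  assert (forall k, (k < n)%nat -> forall u v, x 0%nat <= u -> u < v -> v <= x k ->
            glue x F (n - 2) 0 u < glue x F (n - 2) 0 v).
  { induction k as [|k IH]; intros Hk u v H1 H2 H3.
    - lra.
    - destruct (Rle_lt_dec v (x k)).
      + apply IH; auto; lia.
      + replace (S k) with (k+1)%nat in H3 by lia.
        destruct (Rle_lt_dec (x k) u).
        * apply (Hp k); auto; lia.
        * apply Rlt_trans with (glue x F (n - 2) 0 (x k)).
          -- apply IH; try lia; lra.
          -- apply (Hp k); auto; try lia; lra. }
  intros u v H1 H2 H3. apply (H (n-1)%nat); auto; lia.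
Qed.

Lemma sconv_of_deriv (a b : R) (f f' : R -> R) :
  (forall c, a <= c <= b -> derivable_pt_lim f c (f' c)) ->
  (forall u v, a <= u -> u < v -> v <= b -> f' u < f' v) ->
  strictly_convex_on a b f.
Proof.
  intros HD Hinc.
  assert (key : forall u v l, a <= u -> u < v -> v <= b -> 0 < l < 1 ->
            f (l * u + (1 - l) * v) < l * f u + (1 - l) * f v).
  { intros u v l H1 H2 H3 Hl.
    set (z := l * u + (1 - l) * v).
    assert (Hz1 : u < z) by (unfold z; nra).
    assert (Hz2 : z < v) by (unfold z; nra).
    destruct (MVT_cor2 f f' u z Hz1) as [c1 [E1 Hc1]].
    { intros; apply HD; lra. }
    destruct (MVT_cor2 f f' z v Hz2) as [c2 [E2 Hc2]].
    { intros; apply HD; lra. }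
    assert (f' c1 < f' c2) by (apply Hinc; lra).
    assert (z - u = (1 - l) * (v - u)) by (unfold z; ring).
    assert (v - z = l * (v - u)) by (unfold z; ring).
    assert (l * (1 - l) * (v - u) * (f' c2 - f' c1) > 0).
    { apply Rmult_gt_0_compat; [|lra]. apply Rmult_gt_0_compat; [|lra]. nra. }
    nra. }
  intros u v l Hu Hv Huv Hl.
  destruct (Rlt_le_dec u v).
  - apply key; lra.
  - replace (l * u + (1 - l) * v) with ((1 - l) * v + (1 - (1 - l)) * u) by ring.
    replace (l * f u + (1 - l) * f v) with ((1 - l) * f v + (1 - (1 - l)) * f u) by ring.
    apply key; lra.
Qed.

Lemma conv_of_sconv a b f : strictly_convex_on a b f -> convex_on a b f.
Proof.
  intros H u v l Hu Hv Hl.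
  destruct (Req_dec u v) as [->|Huv].
  - replace (l * v + (1 - l) * v) with v by ring. lra.
  - destruct (Req_dec l 0) as [->|H0].
    + replace (0 * u + (1 - 0) * v) with v by ring. lra.
    + destruct (Req_dec l 1) as [->|H1].
      * replace (1 * u + (1 - 1) * v) with u by ring. lra.
      * left. apply H; auto; lra.
Qed.

Lemma hdw_of_dpl a b f x d : derivable_pt_lim f x d -> has_deriv_within a b f x d.
Proof.
  intros H eps Heps. destruct (H eps Heps) as [del E]. exists del. split; [apply cond_pos|].
  intros y _ Hyx Hy. specialize (E (y - x) ltac:(lra) Hy).
  replace (x + (y - x)) with y in E by ring. auto.
Qed.

Lemma cont_on_of_ct a b f : (forall z, a <= z <= b -> ct f z) -> cont_on a b f.
Proof.
  intros H z Hz eps Heps. destruct (H z Hz eps Heps) as [d [Hd E]]. exists d. split; auto.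
Qed.

Definition cL (h a b : R) := h * b / (a + b).
Definition cal (h a b : R) := a * (a + b) / (b * h).
Definition cga (h a b : R) := b * (a + b) / (a * h).
Definition cF (x0 h y0 p0 a b : R) := Fpc y0 p0 x0 (cal h a b) (cga h a b - cal h a b) (x0 + cL h a b).
Definition cF1 (x0 h p0 a b : R) := F1pc p0 x0 (cal h a b) (cga h a b - cal h a b) (x0 + cL h a b).

Lemma cL_bounds h a b : 0 < h -> 0 < a -> 0 < b -> 0 < cL h a b < h.
Proof.
  intros. unfold cL. split.
  - apply Rdiv_lt_0_compat; nra.
  - apply Rmult_lt_reg_r with (a + b); [lra|]. unfold Rdiv. rewrite Rmult_assoc, Rinv_l by lra. nra.
Qed.

Lemma cF_left x0 h y0 p0 a b : 0 < h -> 0 < a -> 0 < b ->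
  cF x0 h y0 p0 a b x0 = y0 /\ cF1 x0 h p0 a b x0 = p0.
Proof.
  intros. pose proof (cL_bounds h a b) as HL. unfold cF, cF1, Fpc, F1pc, T2.
  rewrite T1_lo by lra. split; field.
Qed.

Lemma cF_right x0 h y0 p0 a b : 0 < h -> 0 < a -> 0 < b ->
  cF x0 h y0 p0 a b (x0 + h) = y0 + (p0 + a) * h /\ cF1 x0 h p0 a b (x0 + h) = p0 + a + b.
Proof.
  intros. pose proof (cL_bounds h a b) as HL. unfold cF, cF1, Fpc, F1pc, T2.
  rewrite T1_hi by lra. unfold cL, cal, cga. split; field; try lra.
Qed.

Lemma cF1_incr x0 h p0 a b u v : 0 < h -> 0 < a -> 0 < b -> u < v ->
  cF1 x0 h p0 a b u < cF1 x0 h p0 a b v.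
Proof.
  intros. unfold cF1, F1pc.
  assert (0 < cal h a b) by (unfold cal; apply Rdiv_lt_0_compat; nra).
  assert (0 < cga h a b) by (unfold cga; apply Rdiv_lt_0_compat; nra).
  pose proof (T1_mono (x0 + cL h a b) u v ltac:(lra)).
  destruct (Rle_lt_dec 0 (cga h a b - cal h a b)); nra.
Qed.

Lemma cF1_lin1 x0 h p0 a b z : 0 < h -> 0 < a -> 0 < b -> z <= x0 + cL h a b ->
  cF1 x0 h p0 a b z = cF1 x0 h p0 a b x0 + cal h a b * (z - x0).
Proof.
  intros. unfold cF1, F1pc. rewrite !T1_lo; try lra. pose proof (cL_bounds h a b); lra.
Qed.

Lemma cF1_lin2 x0 h p0 a b z : 0 < h -> 0 < a -> 0 < b -> x0 + cL h a b <= z ->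
  cF1 x0 h p0 a b z = cF1 x0 h p0 a b (x0 + cL h a b) + cga h a b * (z - (x0 + cL h a b)).
Proof.
  intros. unfold cF1, F1pc. rewrite !T1_hi; lra.
Qed.

Lemma ratio_bounds C u v : 1 <= C -> 0 < v -> / C * v <= u -> u <= C * v -> / C <= u / v <= C.
Proof.
  intros HC Hv H1 H2. split.
  - apply Rmult_le_reg_r with v; auto. unfold Rdiv; rewrite Rmult_assoc, Rinv_l by lra. lra.
  - apply Rmult_le_reg_r with v; auto. unfold Rdiv; rewrite Rmult_assoc, Rinv_l by lra. lra.
Qed.

Lemma prod_bounds C u v : 1 <= C -> / C <= u <= C -> / C <= v <= C -> / (C * C) <= u * v <= C * C.
Proof.
  intros HC Hu Hv. assert (0 < / C) by (apply Rinv_0_lt_compat; lra).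
  rewrite Rinv_mult. split; apply Rmult_le_compat; lra.
Qed.

Lemma cal_bounds C h a b : 1 <= C -> 0 < h -> 0 < a -> 0 < b ->
  / C * h <= a + b <= C * h -> / C * b <= a <= C * b ->
  / (C * C) <= cal h a b <= C * C /\ / (C * C) <= cga h a b <= C * C.
Proof.
  intros HC Hh Ha Hb [H1 H2] [H3 H4].
  assert (Hab : / C <= a / b <= C) by (apply ratio_bounds; auto).
  assert (Hba : / C <= b / a <= C).
  { apply ratio_bounds; auto.
    - apply Rmult_le_reg_l with C; [lra|]. rewrite <- Rmult_assoc, Rinv_r, Rmult_1_l by lra. lra.
    - assert (0 < / C) by (apply Rinv_0_lt_compat; lra).
      apply Rmult_le_reg_l with (/ C); [auto|]. rewrite <- Rmult_assoc, Rinv_l, Rmult_1_l by lra. lra. }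
  assert (Hs : / C <= (a + b) / h <= C) by (apply ratio_bounds; auto).
  split.
  - replace (cal h a b) with ((a / b) * ((a + b) / h)) by (unfold cal; field; lra).
    apply prod_bounds; auto.
  - replace (cga h a b) with ((b / a) * ((a + b) / h)) by (unfold cga; field; lra).
    apply prod_bounds; auto.
Qed.

Definition cAq (h a b D : R) := a + b - D * h.
Definition cEq (h a D : R) := a * h - D * h ^ 2 / 2.
Definition ccc (x0 h a b D : R) := x0 + h - cEq h a D / cAq h a b D.
Definition cee (h a b D kap : R) := cAq h a b D / (kap * h) ^ 2.
Definition cG (x0 h y0 p0 a b D kap : R) := Gpc y0 p0 x0 D (cee h a b D kap) (ccc x0 h a b D) (kap * h).
Definition cG1 (x0 h p0 a b D kap : R) := G1pc p0 x0 D (cee h a b D kap) (ccc x0 h a b D) (kap * h).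
Definition cG2 (x0 h a b D kap : R) := G2pc D (cee h a b D kap) (ccc x0 h a b D) (kap * h).

Lemma helper_ineq a b d r C : 0 < a -> 0 < b -> 0 <= d -> 0 < r < 1 -> 1 <= C -> b <= C * a ->
  d * b <= r * (a * (a + b)) -> d * a <= r * (b * (a + b)) ->
  (1 - r) * (a + b) <= (a - d / 2) * (C + 1).
Proof.
  intros Ha Hb Hd Hr HC H1 H2 H3.
  destruct (Rle_lt_dec a b).
  - assert (d <= 2 * r * a).
    { apply Rmult_le_reg_r with b; auto.
      assert (0 <= r * a * (b - a)) by (apply Rmult_le_pos; [apply Rmult_le_pos|]; lra). nra. }
    assert ((1 - r) * a * (C + 1) >= (1 - r) * (a + b)) by nra.
    nra.
  - assert (d <= r * (a + b)).
    { apply Rmult_le_reg_r with a; auto.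
      assert (0 <= r * (a + b) * (a - b)) by (apply Rmult_le_pos; [apply Rmult_le_pos|]; lra). nra. }
    assert (a - d/2 >= (1-r)*(a+b)/2) by lra.
    assert (0 <= (a - d/2) * (C - 1)) by (apply Rmult_le_pos; nra).
    nra.
Qed.

Lemma cG_geom C r kap h a b D : 0 < h -> 0 < a -> 0 < b -> 1 <= C -> b <= C * a -> a <= C * b ->
  0 < r < 1 -> 0 < D -> D <= r * cal h a b -> D <= r * cga h a b -> kap = (1 - r) / (C + 1) ->
  0 < cAq h a b D /\ 0 < kap * h /\ kap * h <= cEq h a D / cAq h a b D /\ kap * h <= h - cEq h a D / cAq h a b D.
Proof.
  intros Hh Ha Hb HC H1 H2 Hr HD HDa HDg Hk.
  set (d := D * h).
  assert (Hd1 : d * b <= r * (a * (a + b))).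
  { unfold d. unfold cal in HDa.
    replace (r * (a * (a + b) / (b * h))) with (r * (a * (a + b))  / (b * h)) in HDa by (field; lra).
    apply Rmult_le_compat_r with (r := b * h) in HDa; [|nra].
    unfold Rdiv in HDa. rewrite Rmult_assoc, Rinv_l in HDa by nra. nra. }
  assert (Hd2 : d * a <= r * (b * (a + b))).
  { unfold d. unfold cga in HDg.
    replace (r * (b * (a + b) / (a * h))) with (r * (b * (a + b))  / (a * h)) in HDg by (field; lra).
    apply Rmult_le_compat_r with (r := a * h) in HDg; [|nra].
    unfold Rdiv in HDg. rewrite Rmult_assoc, Rinv_l in HDg by nra. nra. }
  assert (0 <= d) by (unfold d; nra).
  pose proof (helper_ineq a b d r C Ha Hb ltac:(lra) Hr HC H1 Hd1 Hd2) as E1.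
  pose proof (helper_ineq b a d r C Hb Ha ltac:(lra) Hr HC H2
               ltac:(replace (b + a) with (a + b) by ring; lra)
               ltac:(replace (b + a) with (a + b) by ring; lra)) as E2.
  assert (Hkp : 0 < kap) by (rewrite Hk; apply Rdiv_lt_0_compat; lra).
  assert (Ek1 : kap * (a + b) <= a - d / 2).
  { rewrite Hk. apply Rmult_le_reg_r with (C + 1); [lra|]. unfold Rdiv.
    replace ((1 - r) * / (C + 1) * (a + b) * (C + 1)) with ((1 - r) * (a + b)) by (field; lra). lra. }
  assert (Ek2 : kap * (a + b) <= b - d / 2).
  { rewrite Hk. apply Rmult_le_reg_r with (C + 1); [lra|]. unfold Rdiv.
    replace ((1 - r) * / (C + 1) * (a + b) * (C + 1)) with ((1 - r) * (a + b)) by (field; lra). lra. }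
  assert (HA : 0 < cAq h a b D) by (unfold cAq; fold d; nra).
  assert (HE : cEq h a D = h * (a - d / 2)) by (unfold cEq, d; field).
  assert (HA' : cAq h a b D = a + b - d) by (unfold cAq, d; ring).
  split; [auto|]. split; [nra|]. split.
  - apply Rmult_le_reg_r with (cAq h a b D); auto.
    replace (cEq h a D / cAq h a b D * cAq h a b D) with (cEq h a D) by (field; lra).
    rewrite HE, HA'.
    assert (kap * (a + b - d) <= a - d / 2) by nra.
    assert (kap * (a + b - d) <= b - d / 2) by nra.
    nra.
  - apply Rmult_le_reg_r with (cAq h a b D); auto.
    replace ((h - cEq h a D / cAq h a b D) * cAq h a b D) with (h * cAq h a b D - cEq h a D) by (field; lra).
    rewrite HE, HA'.
    assert (kap * (a + b - d) <= a - d / 2) by nra.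
    assert (kap * (a + b - d) <= b - d / 2) by nra.
    nra.
Qed.

Lemma hat_left c w z : 0 <= w -> z <= c - w -> hat3 c w z = 0 /\ hat2 c w z = 0 /\ hat1 c w z = 0.
Proof. intros. unfold hat3, hat2, hat1, T3, T2. rewrite !T1_lo by lra. repeat split; field. Qed.

Lemma hat_right c w z : 0 <= w -> c + w <= z ->
  hat3 c w z = (z - c) * w ^ 2 /\ hat2 c w z = w ^ 2 /\ hat1 c w z = 0.
Proof. intros. unfold hat3, hat2, hat1, T3, T2. rewrite !T1_hi by lra. repeat split; field. Qed.

Lemma cG_left x0 h y0 p0 a b D kap : 0 < kap * h -> x0 <= ccc x0 h a b D - kap * h ->
  cG x0 h y0 p0 a b D kap x0 = y0 /\ cG1 x0 h p0 a b D kap x0 = p0 /\ cG2 x0 h a b D kap x0 = D.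
Proof.
  intros Hw Hc. destruct (hat_left (ccc x0 h a b D) (kap * h) x0) as [E3 [E2 E1]]; try lra.
  unfold cG, cG1, cG2, Gpc, G1pc, G2pc. rewrite E3, E2, E1. repeat split; field.
Qed.

Lemma cG_right x0 h y0 p0 a b D kap : 0 < h -> 0 < kap * h -> 0 < cAq h a b D ->
  ccc x0 h a b D + kap * h <= x0 + h ->
  cG x0 h y0 p0 a b D kap (x0 + h) = y0 + (p0 + a) * h /\
  cG1 x0 h p0 a b D kap (x0 + h) = p0 + a + b /\ cG2 x0 h a b D kap (x0 + h) = D.
Proof.
  intros Hh Hw HA Hc. destruct (hat_right (ccc x0 h a b D) (kap * h) (x0 + h)) as [E3 [E2 E1]]; try lra.
  unfold cG, cG1, cG2, Gpc, G1pc, G2pc. rewrite E3, E2, E1.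
  assert (kap <> 0) by (intro; subst; lra).
  unfold cee, ccc, cEq. unfold cAq in *. repeat split; field; repeat split; lra.
Qed.

Lemma cG2_bounds x0 h a b D kap z : 0 < kap * h -> 0 < cAq h a b D ->
  D <= cG2 x0 h a b D kap z <= D + cAq h a b D / (kap * h).
Proof.
  intros Hw HA. unfold cG2, G2pc, cee.
  pose proof (hat1_bounds (ccc x0 h a b D) (kap * h) z ltac:(lra)) as [B1 B2].
  assert (0 < cAq h a b D / (kap * h) ^ 2) by (apply Rdiv_lt_0_compat; auto; nra).
  split; [nra|].
  assert (kap <> 0) by (intro; subst; lra). assert (h <> 0) by (intro; subst; lra).
  replace (cAq h a b D / (kap * h)) with (cAq h a b D / (kap * h) ^ 2 * (kap * h)) by (field; auto).
  nra.
Qed.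

Lemma cG1_incr x0 h p0 a b D kap u v : 0 < D -> 0 < kap * h -> 0 < cAq h a b D -> u < v ->
  cG1 x0 h p0 a b D kap u < cG1 x0 h p0 a b D kap v.
Proof.
  intros HD Hw HA Huv.
  destruct (MVT_cor2 (cG1 x0 h p0 a b D kap) (cG2 x0 h a b D kap) u v Huv) as [c [E _]].
  { intros c _. apply dpl_G1. }
  pose proof (cG2_bounds x0 h a b D kap c Hw HA). nra.
Qed.

Lemma cG2_lip x0 h a b D kap z : ct (cG2 x0 h a b D kap) z.
Proof.
  apply (ct_lip _ (4 * Rabs (cee h a b D kap))). pose proof (Rabs_pos (cee h a b D kap)); lra.
  intros; apply G2pc_lip.
Qed.

Lemma cF1_ct x0 h p0 a b z : ct (cF1 x0 h p0 a b) z.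
Proof.
  apply (ct_lip _ (Rabs (cal h a b) + Rabs (cga h a b - cal h a b))).
  pose proof (Rabs_pos (cal h a b)); pose proof (Rabs_pos (cga h a b - cal h a b)); lra.
  intros; apply F1pc_lip.
Qed.

Lemma minl_le s k j : (j <= k)%nat -> minl s k <= s j.
Proof.
  induction k as [|k IH]; intros Hj; simpl.
  - replace j with 0%nat by lia. lra.
  - destruct (Nat.eq_dec j (S k)) as [->|Hne].
    + apply Rmin_r.
    + eapply Rle_trans. apply Rmin_l. apply IH. lia.
Qed.

Lemma minl_ge s k L : (forall j, (j <= k)%nat -> L <= s j) -> L <= minl s k.
Proof.
  induction k as [|k IH]; intros H; simpl.
  - apply H; lia.
  - apply Rmin_glb. apply IH; intros; apply H; lia. apply H; lia.
Qed.

Lemma even2 k : Nat.even (2 * k) = true.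
Proof. induction k as [|k IH]. reflexivity. replace (2 * S k)%nat with (S (S (2 * k))) by lia. simpl. auto. Qed.
Lemma odd2 k : Nat.even (2 * k + 1) = false.
Proof. induction k as [|k IH]. reflexivity. replace (2 * S k + 1)%nat with (S (S (2 * k + 1))) by lia. simpl. auto. Qed.
Lemma div2_2 k : Nat.div2 (2 * k) = k.
Proof. apply Nat.div2_double. Qed.
Lemma div2_2p1 k : Nat.div2 (2 * k + 1) = k.
Proof. replace (2 * k + 1)%nat with (S (2 * k)) by lia. apply Nat.div2_succ_double. Qed.

Lemma even_or_odd j : exists k, j = (2 * k)%nat \/ j = (2 * k + 1)%nat.
Proof.
  destruct (Nat.Even_or_Odd j) as [[k Hk]|[k Hk]]; exists k; [left|right]; lia.
Qed.

Lemma xinc_of n x : (forall i, (i + 1 < n)%nat -> x i < x (i + 1)%nat) -> xinc n x.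
Proof.
  intros H a b Hab Hb. induction b as [|b IH]; [lia|].
  destruct (Nat.eq_dec a b) as [->|Hne].
  - replace (S b) with (b + 1)%nat by lia. apply H; lia.
  - apply Rlt_trans with (x b). apply IH; lia. replace (S b) with (b + 1)%nat by lia. apply H; lia.
Qed.

Lemma ifacts C x0 x1 y0 y1 p0 p1 : 1 <= C -> x0 < x1 ->
  / C * (x1 - x0) <= p1 - p0 -> p1 - p0 <= C * (x1 - x0) ->
  / C * (p1 - (y1 - y0) / (x1 - x0)) <= (y1 - y0) / (x1 - x0) - p0 ->
  (y1 - y0) / (x1 - x0) - p0 <= C * (p1 - (y1 - y0) / (x1 - x0)) ->
  let h := x1 - x0 in let a := (y1 - y0) / (x1 - x0) - p0 in let b := p1 - (y1 - y0) / (x1 - x0) in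
  0 < h /\ 0 < a /\ 0 < b /\ / C * h <= a + b <= C * h /\ / C * b <= a <= C * b /\ b <= C * a /\
  x1 = x0 + h /\ y1 = y0 + (p0 + a) * h /\ p1 = p0 + a + b.
Proof.
  intros HC Hx H1 H2 H3 H4 h a b. fold h in H1, H2. fold b in H3, H4. fold a in H3, H4. fold h in H3, H4.
  assert (Hab : a + b = p1 - p0) by (unfold a, b; field; lra).
  assert (0 < / C) by (apply Rinv_0_lt_compat; lra).
  assert (0 < h) by (unfold h; lra).
  assert (0 < b).
  { destruct (Rle_lt_dec b 0); auto. assert (/ C * h > 0) by nra. nra. }
  idtac.
  assert (0 < a) by nra.
  assert (b <= C * a).
  { apply Rmult_le_reg_l with (/ C); auto. rewrite <- Rmult_assoc, Rinv_l, Rmult_1_l by lra. lra. }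
  repeat split; try lra.
  all: unfold a, h; field; lra.
Qed.

Lemma glue_node n x i : xinc n x -> (2 <= n)%nat -> (i < n)%nat ->
  exists j, (j + 1 < n)%nat /\ (j = i \/ i = (j + 1)%nat) /\
    forall F, matching n x F -> glue x F (n - 2) 0 (x i) = F j (x i).
Proof.
  intros Hx Hn Hi.
  destruct (Nat.lt_ge_cases (i + 1) n) as [H|H].
  - exists i. split; [auto|]. split; [auto|]. intros F HF. apply (glue_in n); auto.
    pose proof (Hx i (i+1)%nat ltac:(lia) H). lra.
  - exists (n - 2)%nat. split; [lia|]. split; [right; lia|]. intros F HF.
    apply (glue_in n); auto; try lia.
    replace (n - 2 + 1)%nat with i by lia.
    pose proof (Hx (n-2)%nat i ltac:(lia) ltac:(lia)). lra.
Qed.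

Definition hh (x : nat -> R) i := x (i + 1)%nat - x i.
Definition aa (x y p : nat -> R) i := (y (i + 1)%nat - y i) / (x (i + 1)%nat - x i) - p i.
Definition bb (x y p : nat -> R) i := p (i + 1)%nat - (y (i + 1)%nat - y i) / (x (i + 1)%nat - x i).
Definition Fp x y p i := cF (x i) (hh x i) (y i) (p i) (aa x y p i) (bb x y p i).
Definition F1p x y p i := cF1 (x i) (hh x i) (p i) (aa x y p i) (bb x y p i).
Definition tt x y p j := if Nat.even j then x (Nat.div2 j)
  else x (Nat.div2 j) + cL (hh x (Nat.div2 j)) (aa x y p (Nat.div2 j)) (bb x y p (Nat.div2 j)).
Definition ss x y p j := if Nat.even j then cal (hh x (Nat.div2 j)) (aa x y p (Nat.div2 j)) (bb x y p (Nat.div2 j))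
  else cga (hh x (Nat.div2 j)) (aa x y p (Nat.div2 j)) (bb x y p (Nat.div2 j)).
Definition Gp x y p D kap i := cG (x i) (hh x i) (y i) (p i) (aa x y p i) (bb x y p i) D kap.
Definition G1p x y p D kap i := cG1 (x i) (hh x i) (p i) (aa x y p i) (bb x y p i) D kap.
Definition G2p x y p D kap i := cG2 (x i) (hh x i) (aa x y p i) (bb x y p i) D kap.

Theorem theorem5 :
  forall C : R, 1 <= C ->
  exists K : R, 1 <= K /\
  forall (n : nat) (x y p : nat -> R),
    (2 <= n)%nat ->
    (forall i : nat, (i + 1 < n)%nat ->
       x i < x (i + 1)%nat /\ y i < y (i + 1)%nat /\ p i < p (i + 1)%nat) ->
    (forall i : nat, (i + 1 < n)%nat ->
       / C * (x (i + 1)%nat - x i) <= p (i + 1)%nat - p i /\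
       p (i + 1)%nat - p i <= C * (x (i + 1)%nat - x i) /\
       / C * (p (i + 1)%nat - (y (i + 1)%nat - y i) / (x (i + 1)%nat - x i))
         <= (y (i + 1)%nat - y i) / (x (i + 1)%nat - x i) - p i /\
       (y (i + 1)%nat - y i) / (x (i + 1)%nat - x i) - p i
         <= C * (p (i + 1)%nat - (y (i + 1)%nat - y i) / (x (i + 1)%nat - x i))) ->
    exists (f f1 : R -> R) (m : nat) (t s : nat -> R),
      (* (a) *)
      strictly_convex_on (x 0%nat) (x (n - 1)%nat) f /\
      C1_on (x 0%nat) (x (n - 1)%nat) f f1 /\
      (forall i : nat, (i < n)%nat -> f (x i) = y i /\ f1 (x i) = p i) /\
      (* f1 = f' is piecewise linear, pieces [t j, t (j+1)] with slope s j *)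
      (1 <= m)%nat /\
      t 0%nat = x 0%nat /\ t m = x (n - 1)%nat /\
      (forall j : nat, (j < m)%nat -> t j < t (j + 1)%nat) /\
      (forall j : nat, (j < m)%nat ->
         (forall z : R, t j <= z <= t (j + 1)%nat -> f1 z = f1 (t j) + s j * (z - t j)) /\
         / K <= s j <= K) /\
      (* (b) with D = pi/4 * (infimum of the slopes s 0 .. s (m-1)) *)
      (exists g g1 g2 : R -> R,
         convex_on (x 0%nat) (x (n - 1)%nat) g /\
         C2_on (x 0%nat) (x (n - 1)%nat) g g1 g2 /\
         (forall i : nat, (i < n)%nat ->
            g (x i) = y i /\ g1 (x i) = p i /\
            g2 (x i) = PI / 4 * minl s (m - 1)%nat) /\
         (forall z : R, x 0%nat < z < x (n - 1)%nat -> / K <= g2 z <= K)).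
Proof.
  intros C HC.
  pose proof PI_lt_4. pose proof PI_gt_3.
  set (r := PI / 4). assert (Hr : 3 / 4 < r < 1) by (unfold r; lra).
  set (kap := (1 - r) / (C + 1)).
  assert (Hk : 0 < kap) by (apply Rdiv_lt_0_compat; lra).
  assert (HCC : 1 <= C * C) by nra.
  assert (HCk : 0 < C / kap) by (apply Rdiv_lt_0_compat; lra).
  exists (2 * (C * C) + C / kap). split; [lra|].
  intros n x y p Hn Hinc Hcond.
  assert (Hx : xinc n x) by (apply xinc_of; intros; apply Hinc; auto).
  assert (HI : forall i, (i + 1 < n)%nat ->
    0 < hh x i /\ 0 < aa x y p i /\ 0 < bb x y p i /\
    / C * hh x i <= aa x y p i + bb x y p i <= C * hh x i /\
    / C * bb x y p i <= aa x y p i <= C * bb x y p i /\ bb x y p i <= C * aa x y p i /\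
    x (i + 1)%nat = x i + hh x i /\ y (i + 1)%nat = y i + (p i + aa x y p i) * hh x i /\
    p (i + 1)%nat = p i + aa x y p i + bb x y p i).
  { intros i Hi. destruct (Hinc i Hi) as [Hxi _]. destruct (Hcond i Hi) as [c1 [c2 [c3 c4]]].
    exact (ifacts C _ _ _ _ _ _ HC Hxi c1 c2 c3 c4). }
  assert (Fends : forall i, (i + 1 < n)%nat ->
    Fp x y p i (x i) = y i /\ F1p x y p i (x i) = p i /\
    Fp x y p i (x (i + 1)%nat) = y (i + 1)%nat /\ F1p x y p i (x (i + 1)%nat) = p (i + 1)%nat).
  { intros i Hi. destruct (HI i Hi) as [Hh [Ha [Hb [_ [_ [_ [E1 [E2 E3]]]]]]]].
    destruct (cF_left (x i) (hh x i) (y i) (p i) _ _ Hh Ha Hb) as [L1 L2].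
    destruct (cF_right (x i) (hh x i) (y i) (p i) _ _ Hh Ha Hb) as [R1 R2].
    rewrite <- E1 in R1, R2. rewrite <- E2 in R1. rewrite <- E3 in R2.
    unfold Fp, F1p. auto. }
  assert (MF : matching n x (Fp x y p)).
  { intros i Hi. rewrite (proj1 (proj2 (proj2 (Fends i ltac:(lia))))).
    symmetry. apply (Fends (i+1)%nat). lia. }
  assert (MF1 : matching n x (F1p x y p)).
  { intros i Hi. rewrite (proj2 (proj2 (proj2 (Fends i ltac:(lia))))).
    symmetry. apply (Fends (i+1)%nat). lia. }
  set (f := glue x (Fp x y p) (n - 2) 0).
  set (f1 := glue x (F1p x y p) (n - 2) 0).
  set (m := (2 * (n - 1))%nat).
  set (s := ss x y p).
  set (t := tt x y p).
  assert (Hslope : forall k, (k + 1 < n)%nat -> / (C * C) <= s (2 * k)%nat <= C * C /\ / (C * C) <= s (2 * k + 1)%nat <= C * C).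
  { intros k Hk1. destruct (HI k Hk1) as [Hh [Ha [Hb [H1 [H2 _]]]]].
    unfold s, ss. rewrite even2, odd2, div2_2, div2_2p1. apply cal_bounds; auto. }
  set (D := PI / 4 * minl s (m - 1)).
  assert (HD : forall k, (k + 1 < n)%nat -> D <= r * cal (hh x k) (aa x y p k) (bb x y p k) /\
                 D <= r * cga (hh x k) (aa x y p k) (bb x y p k)).
  { intros k Hk1. unfold D. fold r. split.
    - pose proof (minl_le s (m - 1) (2 * k) ltac:(unfold m; lia)) as M.
      assert (Es : s (2 * k)%nat = cal (hh x k) (aa x y p k) (bb x y p k)) by (unfold s, ss; rewrite even2, div2_2; reflexivity).
      rewrite Es in M. apply Rmult_le_compat_l; lra.
    - pose proof (minl_le s (m - 1) (2 * k + 1) ltac:(unfold m; lia)) as M.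
      assert (Es : s (2 * k + 1)%nat = cga (hh x k) (aa x y p k) (bb x y p k)) by (unfold s, ss; rewrite odd2, div2_2p1; reflexivity).
      rewrite Es in M. apply Rmult_le_compat_l; lra. }
  assert (Hsall : forall j, (j <= m - 1)%nat -> / (C * C) <= s j <= C * C).
  { intros j Hj. destruct (even_or_odd j) as [k [->| ->]].
    - apply (Hslope k). unfold m in Hj; lia.
    - apply (Hslope k). unfold m in Hj; lia. }
  assert (HDlo : r / (C * C) <= D).
  { unfold D. fold r. unfold Rdiv. apply Rmult_le_compat_l; [lra|]. apply minl_ge. intros j Hj; apply Hsall; auto. }
  assert (HDhi : D <= C * C).
  { unfold D. fold r. pose proof (minl_le s (m-1) 0 ltac:(lia)). pose proof (Hsall 0%nat ltac:(lia)).
    assert (0 < / (C * C)) by (apply Rinv_0_lt_compat; lra). nra. }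
  assert (HDpos : 0 < D).
  { eapply Rlt_le_trans; [|exact HDlo]. apply Rdiv_lt_0_compat; lra. }
  assert (Geo : forall i, (i + 1 < n)%nat ->
    0 < cAq (hh x i) (aa x y p i) (bb x y p i) D /\ 0 < kap * hh x i /\ x i <= ccc (x i) (hh x i) (aa x y p i) (bb x y p i) D - kap * hh x i /\ ccc (x i) (hh x i) (aa x y p i) (bb x y p i) D + kap * hh x i <= x i + hh x i).
  { intros i Hi. destruct (HI i Hi) as [Hh [Ha [Hb [H1 [H2 [H3 _]]]]]].
    destruct (HD i Hi) as [D1 D2].
    destruct (cG_geom C r kap (hh x i) (aa x y p i) (bb x y p i) D Hh Ha Hb HC H3 (proj2 H2)
                ltac:(lra) HDpos D1 D2 eq_refl) as [G1 [G2 [G3 G4]]].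
    unfold ccc. split; [auto|]. split; [auto|]. split; lra. }
  assert (Gends : forall i, (i + 1 < n)%nat ->
    Gp x y p D kap i (x i) = y i /\ G1p x y p D kap i (x i) = p i /\ G2p x y p D kap i (x i) = D /\ Gp x y p D kap i (x (i + 1)%nat) = y (i + 1)%nat /\ G1p x y p D kap i (x (i + 1)%nat) = p (i + 1)%nat /\ G2p x y p D kap i (x (i + 1)%nat) = D).
  { intros i Hi. destruct (HI i Hi) as [Hh [Ha [Hb [_ [_ [_ [E1 [E2 E3]]]]]]]].
    destruct (Geo i Hi) as [G1 [G2 [G3 G4]]].
    destruct (cG_left (x i) (hh x i) (y i) (p i) (aa x y p i) (bb x y p i) D kap G2 G3) as [L1 [L2 L3]].
    destruct (cG_right (x i) (hh x i) (y i) (p i) (aa x y p i) (bb x y p i) D kap Hh G2 G1 G4) as [R1 [R2 R3]].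
    rewrite <- E1 in R1, R2, R3. rewrite <- E2 in R1. rewrite <- E3 in R2.
    unfold Gp, G1p, G2p. repeat split; assumption. }
  assert (MG : matching n x (Gp x y p D kap)).
  { intros i Hi. destruct (Gends i ltac:(lia)) as [_ [_ [_ [A _]]]]. rewrite A.
    symmetry. apply (Gends (i+1)%nat). lia. }
  assert (MG1 : matching n x (G1p x y p D kap)).
  { intros i Hi. destruct (Gends i ltac:(lia)) as [_ [_ [_ [_ [A _]]]]]. rewrite A.
    symmetry. apply (Gends (i+1)%nat). lia. }
  assert (MG2 : matching n x (G2p x y p D kap)).
  { intros i Hi. destruct (Gends i ltac:(lia)) as [_ [_ [_ [_ [_ A]]]]]. rewrite A.
    symmetry. apply (Gends (i+1)%nat). lia. }
  assert (DF : forall c, x 0%nat <= c <= x (n - 1)%nat -> derivable_pt_lim f c (f1 c)).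
  { intros c Hc. apply (glue_deriv n x (Fp x y p) (F1p x y p)); auto.
    intros i Hi z; unfold Fp, F1p, cF, cF1; apply dpl_F. }
  assert (DG : forall c, x 0%nat <= c <= x (n - 1)%nat ->
     derivable_pt_lim (glue x (Gp x y p D kap) (n - 2) 0) c (glue x (G1p x y p D kap) (n - 2) 0 c)).
  { intros c Hc. apply (glue_deriv n x); auto.
    intros i Hi z; unfold Gp, G1p, cG, cG1; apply dpl_G. }
  assert (DG1 : forall c, x 0%nat <= c <= x (n - 1)%nat ->
     derivable_pt_lim (glue x (G1p x y p D kap) (n - 2) 0) c (glue x (G2p x y p D kap) (n - 2) 0 c)).
  { intros c Hc. apply (glue_deriv n x); auto.
    intros i Hi z; unfold G2p, G1p, cG2, cG1; apply dpl_G1. }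
  exists f, f1, m, t, s.
  split.
  { apply (sconv_of_deriv _ _ f f1); auto.
    intros u v H1 H2 H3. apply (glue_incr n x (F1p x y p)); auto.
    intros i Hi u0 v0 _ Huv _. destruct (HI i Hi) as [Hh [Ha [Hb _]]].
    unfold F1p. apply cF1_incr; auto. }
  split.
  { split.
    - intros z Hz. apply hdw_of_dpl. auto.
    - apply cont_on_of_ct. intros z Hz. apply (glue_ct n); auto.
      intros; unfold F1p; apply cF1_ct. }
  split.
  { intros i Hi. destruct (glue_node n x i Hx Hn Hi) as [j [Hj [Hji Hg]]].
    unfold f, f1. rewrite (Hg _ MF), (Hg _ MF1).
    destruct Hji as [<- | ->].
    - destruct (Fends j Hj) as [A [B _]]; auto.
    - destruct (Fends j Hj) as [_ [_ [A B]]]; auto. }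
  split; [unfold m; lia|].
  split; [reflexivity|].
  split; [unfold t, tt, m; rewrite even2, div2_2; reflexivity|].
  assert (Ht0 : forall k, t (2 * k)%nat = x k) by (intros; unfold t, tt; rewrite even2, div2_2; reflexivity).
  assert (Ht1 : forall k, t (2 * k + 1)%nat = x k + cL (hh x k) (aa x y p k) (bb x y p k))
    by (intros; unfold t, tt; rewrite odd2, div2_2p1; reflexivity).
  assert (Ht2 : forall k, t (2 * k + 1 + 1)%nat = x (k + 1)%nat)
    by (intros; replace (2 * k + 1 + 1)%nat with (2 * (k + 1))%nat by lia; apply Ht0).
  assert (Hs0 : forall k, s (2 * k)%nat = cal (hh x k) (aa x y p k) (bb x y p k))
    by (intros; unfold s, ss; rewrite even2, div2_2; reflexivity).
  assert (Hs1 : forall k, s (2 * k + 1)%nat = cga (hh x k) (aa x y p k) (bb x y p k))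
    by (intros; unfold s, ss; rewrite odd2, div2_2p1; reflexivity).
  assert (HKs : / (2 * (C * C) + C / kap) <= / (C * C)) by (apply Rinv_le_contravar; lra).
  split.
  { intros j Hj. destruct (even_or_odd j) as [k [-> | ->]].
    - assert (Hk1 : (k + 1 < n)%nat) by (unfold m in Hj; lia).
      destruct (HI k Hk1) as [Hh [Ha [Hb [_ [_ [_ [E1 _]]]]]]].
      pose proof (cL_bounds _ _ _ Hh Ha Hb).
      rewrite Ht0, Ht1. lra.
    - assert (Hk1 : (k + 1 < n)%nat) by (unfold m in Hj; lia).
      destruct (HI k Hk1) as [Hh [Ha [Hb [_ [_ [_ [E1 _]]]]]]].
      pose proof (cL_bounds _ _ _ Hh Ha Hb).
      rewrite Ht1, Ht2. lra. }
  split.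
  { intros j Hj. destruct (even_or_odd j) as [k [-> | ->]].
    - assert (Hk1 : (k + 1 < n)%nat) by (unfold m in Hj; lia).
      destruct (HI k Hk1) as [Hh [Ha [Hb [_ [_ [_ [E1 _]]]]]]].
      pose proof (cL_bounds _ _ _ Hh Ha Hb).
      pose proof (Hslope k Hk1) as [S1 _].
      split; [|split; lra].
      intros z Hz. rewrite Ht1 in Hz. rewrite Ht0 in *. rewrite Hs0.
      unfold f1. rewrite (glue_in n x _ k z), (glue_in n x _ k (x k)); auto; try lra.
      unfold F1p. apply cF1_lin1; auto. lra.
    - assert (Hk1 : (k + 1 < n)%nat) by (unfold m in Hj; lia).
      destruct (HI k Hk1) as [Hh [Ha [Hb [_ [_ [_ [E1 _]]]]]]].
      pose proof (cL_bounds _ _ _ Hh Ha Hb).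
      pose proof (Hslope k Hk1) as [_ S1].
      split; [|split; lra].
      intros z Hz. rewrite Ht2 in Hz. rewrite Ht1 in *. rewrite Hs1.
      unfold f1. rewrite (glue_in n x _ k z), (glue_in n x _ k (x k + _)); auto; try lra.
      unfold F1p. apply cF1_lin2; auto. lra. }
  exists (glue x (Gp x y p D kap) (n - 2) 0), (glue x (G1p x y p D kap) (n - 2) 0),
         (glue x (G2p x y p D kap) (n - 2) 0).
  split.
  { apply conv_of_sconv. apply (sconv_of_deriv _ _ _ (glue x (G1p x y p D kap) (n - 2) 0)); auto.
    intros u v H1 H2 H3. apply (glue_incr n x (G1p x y p D kap)); auto.
    intros i Hi u0 v0 _ Huv _. destruct (Geo i Hi) as [G1 [G2 _]].
    unfold G1p. apply cG1_incr; auto. }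
  split.
  { split; [|split].
    - intros z Hz. apply hdw_of_dpl. auto.
    - intros z Hz. apply hdw_of_dpl. auto.
    - apply cont_on_of_ct. intros z Hz. apply (glue_ct n); auto.
      intros; unfold G2p; apply cG2_lip. }
  split.
  { intros i Hi. destruct (glue_node n x i Hx Hn Hi) as [j [Hj [Hji Hg]]].
    rewrite (Hg _ MG), (Hg _ MG1), (Hg _ MG2). fold D.
    destruct Hji as [<- | ->].
    - destruct (Gends j Hj) as [A [B [E _]]]; auto.
    - destruct (Gends j Hj) as [_ [_ [_ [A [B E]]]]]; auto. }
  intros z Hz.
  destruct (locate n x z Hx Hn ltac:(lra)) as [j [Hj Hzj]].
  rewrite (glue_in n x _ j z); auto.
  destruct (Geo j Hj) as [G1 [G2 _]].
  destruct (HI j Hj) as [Hh [Ha [Hb [[_ H2] _]]]].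
  pose proof (cG2_bounds (x j) (hh x j) (aa x y p j) (bb x y p j) D kap z G2 G1) as [B1 B2].
  unfold G2p. split.
  - apply Rle_trans with (/ (2 * (C * C))).
    + apply Rinv_le_contravar; lra.
    + assert (0 < / (C * C)) by (apply Rinv_0_lt_compat; lra).
      rewrite Rinv_mult. unfold Rdiv in HDlo. nra.
  - assert (cAq (hh x j) (aa x y p j) (bb x y p j) D / (kap * hh x j) <= C / kap).
    { replace (C / kap) with (C * hh x j / (kap * hh x j)) by (field; lra).
      unfold Rdiv. apply Rmult_le_compat_r.
      + left; apply Rinv_0_lt_compat; lra.
      + unfold cAq. nra. }
    lra.
Qed.
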